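(* Let $a,b$ be integers with $0<b<a$, let $S=\langle a,a+1,\ldots,a+b\rangle$ with conductor $c$ and genus $g$, and let $m\ge 2c-1$. Let $m=m_1<m_2<\cdots<m_t$ be integers such that $\{m_1,\ldots,m_t\}$ is amenable, and assume that $\{m_1,\ldots,m_t\}\cap[m,m+a+b)=\{m,m+1,\ldots,m+l-1\}$ for some positive integer $l$. Then $$\sharp\mathrm D(m_1,\ldots,m_t)=m-2g+t+\sum_{j=1}^{l-1}\left\lceil\frac{a-j}{b}\right\rceil.$$
   Context: The genus of a numerical semigroup $S$ is $g=\sharp(\mathbb N\setminus S)$ and its conductor $c$ is the least element of $S$ with $c+n\in S$ for all $n\in\mathbb N$. For $x\in S$, $\mathrm D(x)=\{\alpha\in S\mid x-\alpha\in S\}$, and $\mathrm D(x_1,\ldots,x_t)=\mathrm D(x_1)\cup\cdots\cup\mathrm D(x_t)$. A set $M=\{m_1<\cdots<m_t\}\subseteq S$ with $2c-1\le m=m_1$ is amenable if $\mathrm D(m_i)\cap[m,\infty)\subseteq M$ for all $i$. *)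

(* Defs.v *)
From mathcomp Require Import all_boot all_order all_algebra.
Set Implicit Arguments. Unset Strict Implicit. Unset Printing Implicit Defensive.

(* Computed by recursion with fuel; since a > 0 every
   generator is >= 1, so fuel n suffices to decide membership of n. *)
Fixpoint memS_fuel (a b fuel n : nat) : bool :=
  match fuel with
  | 0 => n == 0
  | f.+1 => (n == 0) ||
      [exists i : 'I_b.+1, (a + i <= n) && memS_fuel a b f (n - (a + i))]
  end.

Definition inS (a b n : nat) : bool := memS_fuel a b n n.

Definition is_conductor (a b c : nat) : Prop :=
  [/\ inS a b c, (forall n, inS a b (c + n)) &
      (forall c', inS a b c' -> (forall n, inS a b (c' + n)) -> c <= c')].

(* genus: number of gaps; all gaps are below the conductor c. *)
Definition genus_below (a b c : nat) : nat :=
  count (fun n => ~~ inS a b n) (iota 0 c).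

Definition inD (a b x alpha : nat) : bool :=
  [&& alpha <= x, inS a b alpha & inS a b (x - alpha)].

Definition Dunion (a b : nat) (M : seq nat) : seq nat :=
  [seq alpha <- iota 0 (\max_(x <- M) x).+1 | has (fun x => inD a b x alpha) M].

Definition amenable (a b c : nat) (M : seq nat) : Prop :=
  match M with
  | [::] => False
  | m :: _ =>
      [/\ sorted ltn M, 2 * c - 1 <= m, all (inS a b) M &
          forall x alpha, x \in M -> inD a b x alpha -> m <= alpha -> alpha \in M]
  end.

(* Main.v *)
Require Import Defs.
From mathcomp Require Import all_boot all_order all_algebra zify.
Import Order.TTheory GRing.Theory Num.Theory.

Lemma ceil_term (a b j : nat) : 0 < b -> j < a + b ->
  (Num.ceil (((a%:Z - j%:Z)%:~R : rat) / (b%:R : rat)) = ((a - j + b.-1) %/ b)%N%:Z)%R.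
Proof.
move=> hb hj.
have hz0 : a <= j -> (a - j + b.-1) %/ b = 0.
  move=> h; rewrite divn_small //; lia.
set z := (a - j + b.-1) %/ b.
have hz := divn_eq (a - j + b.-1) b.
have hr := ltn_pmod (a - j + b.-1) hb.
have -> : (b%:R : rat) = ((b%:Z)%:~R)%R by [].
have hbR0 : (0 < b%:Z)%R by rewrite ltz_nat.
have hbR' : ((0 : rat) < (b%:Z)%:~R)%R by rewrite ltr0n.
have hw0 : a <= j -> z * b = 0 by move=> /hz0; rewrite -/z => ->.
move: hz hr hw0; rewrite -/z; move: (z * b) ((a - j + b.-1) %% b) => w r hz hr hw0.
apply: ceil_def; apply/andP; split.
- rewrite ltr_pdivlMr // -intrM ltr_int mulrBl mul1r -PoszM. lia.
- rewrite ler_pdivrMr // -intrM ler_int -PoszM. lia.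
Qed.
Lemma memS_fuelP a b f n : 0 < a -> n <= f ->
  memS_fuel a b f n <-> exists k, k * a <= n <= k * (a + b).
Proof.
move=> ha; elim: f n => [|f IH] n hn /=.
  have -> : n = 0 by lia.
  by split=> // _; exists 0.
split.
- case/orP => [/eqP -> | /existsP [i /andP [hi hm]]]; first by exists 0.
  have hi' := ltn_ord i.
  have [k hk] := (IH (n - (a + i)) ltac:(lia)).1 hm.
  exists k.+1; rewrite !mulSn mulnDr; rewrite mulnDr in hk; lia.
- case=> k hk.
  case: (eqVneq n 0) => [-> //|hn0]; apply/orP; right.
  case: k hk => [|k] hk; first by move: hk; rewrite !mul0n; lia.
  have hib : minn b (n - k.+1 * a) < b.+1 by rewrite ltnS geq_minl.
  apply/existsP; exists (Ordinal hib); apply/andP; split => /=.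
    rewrite mulSn in hk; lia.
  apply/IH; first lia.
  exists k; rewrite mulnDr; rewrite !mulSn mulnDr in hk; lia.
Qed.

Lemma inSP a b n : 0 < a ->
  reflect (exists k, k * a <= n <= k * (a + b)) (inS a b n).
Proof.
move=> ha; rewrite /inS; apply: (iffP idP) => h.
  exact: ((memS_fuelP a b n n ha (leqnn n)).1 h).
exact: (memS_fuelP a b n n ha (leqnn n)).2 h.
Qed.

Lemma inS_div a b n : 0 < a -> inS a b n = (n %% a <= (n %/ a) * b).
Proof.
move=> ha; apply/inSP/idP => // [[k hk]|h].
  have hq : k <= n %/ a by rewrite leq_divRL //; lia.
  have h1 : k * a <= n %/ a * a by rewrite leq_mul2r hq orbT.
  have h2 : k * b <= n %/ a * b by rewrite leq_mul2r hq orbT.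
  have := divn_eq n a; rewrite mulnDr in hk; lia.
exists (n %/ a); have := divn_eq n a; rewrite mulnDr; lia.
Qed.
Lemma split_S a b h n : 0 < a -> inS a b n -> h + a + b <= n ->
  exists u, [/\ h <= u, u < h + a + b, u <= n, inS a b u & inS a b (n - u)].
Proof.
move=> ha /(inSP a b n ha) [K hK] hn.
pose Lf k := maxn (k * a) (n - (K - k) * (a + b)).
have hL : forall k, k <= K -> [/\ inS a b (Lf k), inS a b (n - Lf k) & Lf k <= n].
  move=> k hk; rewrite /Lf.
  have hK' : K = k + (K - k) by lia.
  move: (K - k) hK' => e hK'; rewrite hK' !mulnDl !mulnDr in hK.
  rewrite !mulnDr.
  split.
  - apply/inSP => //; exists k; rewrite mulnDr; lia.
  - apply/inSP => //; exists e; rewrite mulnDr; lia.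
  - lia.
have step : forall k, k < K -> Lf k.+1 <= Lf k + a + b.
  move=> k hk; rewrite /Lf.
  have -> : K - k = (K - k.+1).+1 by lia.
  rewrite !mulSn; lia.
have main : forall k, k <= K -> h <= Lf k ->
    exists u, [/\ h <= u, u < h + a + b, u <= n, inS a b u & inS a b (n - u)].
  elim=> [|k IH] hk hh.
    have [h1 h2 h3] := hL 0 hk.
    have h0 : Lf 0 = 0 by rewrite /Lf subn0 mul0n; lia.
    exists (Lf 0); split => //; lia.
  case: (leqP h (Lf k)) => hh'; first exact: IH (ltnW hk) hh'.
  have [h1 h2 h3] := hL k.+1 hk.
  have := step k hk.
  exists (Lf k.+1); split => //; lia.
apply: (main K (leqnn K)).
rewrite /Lf subnn mul0n subn0; lia.
Qed.
Lemma sum_gt x n : \sum_(0 <= r < n) (x < r : nat) = n - x.+1.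
Proof.
elim: n => [|n IH]; first by rewrite big_geq.
rewrite big_nat_recr //= IH; case: (ltnP x n) => /= h; lia.
Qed.

Lemma sum_lt b n K : 0 < b -> n <= K ->
  \sum_(0 <= q < K) (q * b < n : nat) = (n + b.-1) %/ b.
Proof.
move=> hb hnK.
set z := (n + b.-1) %/ b.
have hq : forall q, (q * b < n) = (q < z).
  move=> q; rewrite /z -[q < _]/(q.+1 <= _) leq_divRL // mulSn; apply/idP/idP; lia.
have hz : z <= n.
  rewrite /z -ltnS ltn_divLR // mulSn.
  have : n <= n * b by rewrite leq_pmulr.
  lia.
rewrite (@big_cat_nat _ _ _ z) //=; last lia.
rewrite (eq_big_nat _ _ (F2 := fun _ => 1)); last by move=> i /andP [_ hi]; rewrite hq hi.
rewrite (eq_big_nat _ _ (F1 := fun i => (i * b < n : nat)) (F2 := fun _ => 0)); last first.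
  by move=> i /andP [hi _]; rewrite hq ltnNge hi.
by rewrite !sum_nat_const_nat; lia.
Qed.

Lemma block_sum a b l K : 0 < a ->
  \sum_(0 <= h < K * a) (~~ inS a b h && (a - h %% a < l) : nat) =
  \sum_(0 <= q < K) (a - (maxn (q * b) (a - l)).+1).
Proof.
move=> ha; elim: K => [|K IH]; first by rewrite mul0n !big_geq.
rewrite big_nat_recr //= -IH mulSn addnC (@big_cat_nat _ _ _ (K * a)) //=; last lia.
congr (_ + _).
rewrite -{1}(add0n (K * a)) big_addn addKn.
rewrite (eq_big_nat _ _ (F2 := fun r => (maxn (K * b) (a - l) < r : nat))).
  exact: sum_gt.
move=> r /andP [_ hr].
rewrite [r + _]addnC inS_div // modnMDl divnMDl // modn_small // divn_small // addn0.
rewrite -ltnNge; congr (nat_of_bool _).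
apply/idP/idP; lia.
Qed.
Lemma Ysum a b l K : 0 < b -> 0 < a -> 0 < l -> l <= a + b -> a <= K ->
  \sum_(1 <= j < l) (a - j + b.-1) %/ b =
  \sum_(0 <= q < K) (a - (maxn (q * b) (a - l)).+1).
Proof.
move=> hb ha; case: l => [//|l] _; elim: l => [|l IH] hl hK.
  rewrite big_geq // big1 // => q _; lia.
rewrite big_nat_recr //= IH //; last lia.
rewrite -(@sum_lt b (a - l.+1) K hb); last lia.
rewrite -big_split /=; apply: eq_bigr => q _.
case: (ltnP (q * b) (a - l.+1)) => /= h; lia.
Qed.
Lemma count_sum (T : Type) (P : pred T) (s : seq T) :
  count P s = \sum_(x <- s) (P x : nat).
Proof. by elim: s => [|x s IH]; rewrite ?big_nil ?big_cons //= IH. Qed.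

Lemma count_iota_sum (P : pred nat) n :
  count P (iota 0 n) = \sum_(0 <= i < n) (P i : nat).
Proof. by rewrite count_sum /index_iota subn0. Qed.

Lemma count_mem_uniq (s M : seq nat) : uniq s -> uniq M -> {subset M <= s} ->
  count (mem M) s = size M.
Proof.
move=> us uM sub; rewrite -size_filter; apply/perm_size/uniq_perm.
- exact: filter_uniq.
- exact: uM.
- move=> x; rewrite mem_filter; apply/andP/idP => [[]//|hx]; split=> //; exact: sub.
Qed.

Lemma inS0 a b : inS a b 0.
Proof. by []. Qed.

Lemma gap_lt a b h : 0 < a -> 0 < b -> ~~ inS a b h -> h < a * a.
Proof.
move=> ha hb; rewrite inS_div // -ltnNge => hg.
have hm := ltn_pmod h ha.
have hq : h %/ a <= h %/ a * b by rewrite leq_pmulr.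
have hqa : (h %/ a).+1 <= a by lia.
have : (h %/ a).+1 * a <= a * a by rewrite leq_mul2r hqa orbT.
rewrite mulSn; have := divn_eq h a; lia.
Qed.

Lemma core a b h d : 0 < a -> ~~ inS a b h -> inS a b (h + d) -> a - h %% a <= d.
Proof.
move=> ha hg hs; rewrite leqNgt; apply/negP => hd.
move: hg hs; rewrite !inS_div // -ltnNge => hg.
have hm := ltn_pmod h ha.
have he : h + d = h %/ a * a + (h %% a + d) by rewrite {1}(divn_eq h a); lia.
rewrite he modnMDl divnMDl // (modn_small (m := h %% a + d)); last lia.
rewrite (divn_small (m := h %% a + d)); last lia.
rewrite addn0; lia.
Qed.

Theorem corollary4p8 (a b c g m l : nat) (ms : seq nat)
  (hb : 0 < b) (hba : b < a)
  (hc : is_conductor a b c) (hg : g = genus_below a b c)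
  (hm : 2 * c - 1 <= m)
  (hsort : sorted ltn (m :: ms))
  (hamen : amenable a b c (m :: ms))
  (hl : 0 < l)
  (hwin : forall n, (n \in m :: ms) && (m <= n < m + a + b) = (m <= n < m + l)) :
  ((size (Dunion a b (m :: ms)))%:Z =
    m%:Z - 2 * g%:Z + (size (m :: ms))%:Z +
     \sum_(1 <= j < l) Num.ceil (((a%:Z - j%:Z)%:~R : rat) / (b%:R : rat)))%R.
Proof.
have ha : 0 < a by lia.
set M := m :: ms.
case: hamen => _ _ hall hamen.
case: hc => _ hcn _.
have inS_ge : forall n, c <= n -> inS a b n.
  by move=> n hn; rewrite -(subnKC hn); apply: hcn.
have hc1 : 0 < c.
  case: (posnP c) => // hc0; have := inS_ge 1; rewrite hc0 => /(_ isT).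
  rewrite inS_div // modn_small; last lia. rewrite divn_small //; lia.
have hmc : c <= m by lia.
have hlab : l <= a + b.
  rewrite leqNgt; apply/negP => hlt.
  have := hwin (m + a + b); rewrite ltnn andbF; lia.
have hwin' : forall d, d < a + b -> (m + d \in M) = (d < l).
  move=> d hd; have := hwin (m + d); rewrite leq_addr /= (_ : m + d < m + a + b) //; last lia.
  by rewrite andbT => ->; lia.
have Mge : forall x, x \in M -> m <= x.
  move=> x; rewrite inE => /orP [/eqP -> //|hx].
  have := order_path_min ltn_trans hsort => /allP /(_ x hx); lia.
have uM : uniq M by apply: (sorted_uniq ltn_trans ltnn).
have mM : m \in M by rewrite inE eqxx.
have inSM : forall x, x \in M -> inS a b x by apply/allP.
set mx := \max_(x <- M) x.
have hmx : forall x, x \in M -> x <= mx by move=> x hx; rewrite /mx; apply: leq_bigmax_seq.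
set P := fun alpha => has (fun x => inD a b x alpha) M.
have -> : size (Dunion a b M) = \sum_(0 <= i < mx.+1) (P i : nat).
  by rewrite /Dunion size_filter count_iota_sum.
have hmx1 : m <= mx.+1 by have := hmx m mM; lia.
rewrite (@big_cat_nat _ _ _ m) //= (@big_cat_nat _ _ _ (m - c + 1)) //=; last lia.
have part3 : \sum_(m <= i < mx.+1) (P i : nat) = size M.
  rewrite (eq_big_nat _ _ (F2 := fun i => (i \in M : nat))); last first.
    move=> i /andP [hi _]; congr (nat_of_bool _); apply/idP/idP.
    - case/hasP => x hx hD; exact: hamen hx hD hi.
    - move=> hiM; apply/hasP; exists i => //.
      by rewrite /inD leqnn inSM // subnn inS0.
  rewrite -count_sum -/(index_iota m mx.+1) count_mem_uniq //.
    exact: iota_uniq.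
  move=> x hx; rewrite mem_iota; have := Mge x hx; have := hmx x hx; lia.
have part1 : \sum_(0 <= i < m - c + 1) (P i : nat) = \sum_(0 <= i < m - c + 1) (inS a b i : nat).
  apply: eq_big_nat => i /andP [_ hi]; congr (nat_of_bool _); apply/idP/idP.
  - by case/hasP => x _ /and3P [].
  - move=> hs; apply/hasP; exists m => //.
    rewrite /inD hs inS_ge /=; lia.
set G := fun h => inS a b h || (a - h %% a < l).
have keyP : forall h, 0 < h -> h < c -> P (m - h) = G h.
  move=> h h0 hc'.
  have hmh : inS a b (m - h) by apply: inS_ge; lia.
  rewrite /P /G; case: (boolP (inS a b h)) => hs; rewrite ?orTb ?orFb.
    apply/hasP; exists m => //; rewrite /inD hmh subKn ?hs; lia.
  apply/hasP/idP.
  - case=> x hx /and3P [hxle _ hxs].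
    have hxm := Mge x hx.
    move: hxs; rewrite (_ : x - (m - h) = h + (x - m)); last lia.
    set d := x - m => hxs.
    have hcore : forall d', m + d' \in M -> d' < a + b -> inS a b (h + d') -> a - h %% a < l.
      move=> d' hd' hdab hs'; have := core a b h d' ha hs hs'.
      move: hd'; rewrite hwin' //; lia.
    case: (ltnP d (a + b)) => hdab.
      apply: (hcore d) => //; rewrite /d subnKC //.
    have [u [hu1 hu2 hu3 hu4 hu5]] := split_S a b h (h + d) ha hxs ltac:(lia).
    apply: (hcore (u - h)) => //; last by rewrite subnKC.
    - apply: (hamen x) => //; last lia.
      rewrite /inD inS_ge /=; last lia.
      rewrite (_ : x - (m + (u - h)) = h + d - u); last lia.
      rewrite hu5 andbT; lia.
    - lia.
  - move=> hlt; exists (m + (a - h %% a)).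
      by rewrite hwin' //; lia.
    rewrite /inD hmh /=; apply/andP; split; first lia.
    have hmod := ltn_pmod h ha.
    rewrite (_ : m + (a - h %% a) - (m - h) = (h %/ a).+1 * a); last first.
      rewrite mulSn; have := divn_eq h a; lia.
    by rewrite inS_div // modnMl.
have part2 : \sum_(m - c + 1 <= i < m) (P i : nat) + 1 = \sum_(0 <= h < c) (G h : nat).
  have hG0 : G 0 by rewrite /G inS0.
  rewrite [RHS]big_ltn // (_ : (G 0 : nat) = 1); last by rewrite /G inS0.
  rewrite big_add1 [RHS]addnC; congr (_ + _).
  rewrite -[in LHS](add0n (m - c + 1)) big_addn.
  rewrite (_ : m - (m - c + 1) = c.-1); last lia.
  rewrite [RHS]big_nat_rev; apply: eq_big_nat => i /andP [_ hi].
  rewrite add0n (_ : i + (m - c + 1) = m - (c.-1 - i.+1).+1); last lia.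
  rewrite keyP //; lia.
have hgs : g = \sum_(0 <= h < c) (~~ inS a b h : nat) by rewrite hg /genus_below count_iota_sum.
have hSI : \sum_(0 <= h < c) (inS a b h : nat) + g = c.
  rewrite hgs -big_split /= (eq_big_nat _ _ (F2 := fun _ => 1)).
    by rewrite sum_nat_const_nat; lia.
  by move=> i _; case: (inS a b i).
have hS1 : \sum_(0 <= i < m - c + 1) (inS a b i : nat) + g = m - c + 1.
  have -> : g = \sum_(0 <= i < m - c + 1) (~~ inS a b i : nat).
    rewrite hgs (@big_cat_nat _ _ _ c _ (m - c + 1)) //=; last lia.
    rewrite [Z in _ + Z]big1_seq ?addn0 // => i /andP [_].
    by rewrite mem_index_iota => /andP [hi _]; rewrite inS_ge.
  rewrite -big_split /= (eq_big_nat _ _ (F2 := fun _ => 1)).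
    by rewrite sum_nat_const_nat; lia.
  by move=> i _; case: (inS a b i).
set X := \sum_(0 <= h < c) (~~ inS a b h && (a - h %% a < l) : nat).
have hGs : \sum_(0 <= h < c) (G h : nat) = \sum_(0 <= h < c) (inS a b h : nat) + X.
  rewrite /X -big_split /=; apply: eq_bigr => i _; rewrite /G.
  by case: (inS a b i).
set Y := \sum_(1 <= j < l) (a - j + b.-1) %/ b.
have hX : X = Y.
  have hX1 : X = \sum_(0 <= h < c + a * a) (~~ inS a b h && (a - h %% a < l) : nat).
    rewrite (@big_cat_nat _ _ _ c) //=; last lia.
    rewrite [Z in _ = _ + Z]big1_seq ?addn0 // => i /andP [_].
    by rewrite mem_index_iota => /andP [hi _]; rewrite inS_ge.
  rewrite hX1 (@big_cat_nat _ _ _ (a * a)) //=; last lia.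
  rewrite [Z in _ + Z = _]big1_seq ?addn0; last first.
    move=> i /andP [_]; rewrite mem_index_iota => /andP [hi _].
    case: (boolP (inS a b i)) => //= hi'; by rewrite leqNgt (gap_lt a b i ha hb hi') in hi.
  by rewrite (block_sum a b l a ha) /Y (Ysum a b l a hb ha hl hlab (leqnn a)).
have hceil : (\sum_(1 <= j < l) Num.ceil (((a%:Z - j%:Z)%:~R : rat) / (b%:R : rat)) = Y%:Z)%R.
  rewrite /Y (big_morph Posz PoszD (erefl _)).
  apply: eq_big_nat => j /andP [hj1 hj2]; apply: ceil_term => //; lia.
rewrite hceil part1 part3.
move: part2 hS1 hSI hGs hX; rewrite /M /=.
move: (\sum_(m - c + 1 <= i < m) (P i : nat)) (\sum_(0 <= i < m - c + 1) (inS a b i : nat))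
  (\sum_(0 <= h < c) (inS a b h : nat)) (\sum_(0 <= h < c) (G h : nat)) => s2 s1 sI sG.
move=> *; lia.
Qed.
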